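(* Let $n>0$ and $k>1$. The minimal elements, among the subquasivarieties of $\mathcal{Q}(\mathbf{ŁV}_{nk+1})$ strictly containing $\mathcal{Q}(\mathbf{ŁV}_{n+1})$, are exactly the quasivarieties in $$\{\mathcal{Q}(\{\mathbf{ŁV}_{n+1},\mathbf{ŁV}_{q+1}\times\mathbf{ŁV}_2\}) : q\text{ prime},\ q\mid k,\ q\nmid n\}\ \cup\ \{\mathcal{Q}(\{\mathbf{ŁV}_{n+1},\mathbf{ŁV}_{q^{r+1}+1}\times\mathbf{ŁV}_2\}) : q\text{ prime},\ r\ge1,\ q\mid k,\ q^r\mid n,\ q^{r+1}\nmid n\}.$$
   Context: $\mathbf{ŁV}_{m+1}$ is the MV-algebra (Łukasiewicz chain) on $\{0,\frac1m,\dots,1\}$ with $\neg x=1-x$, $x\oplus y=\min\{1,x+y\}$; $\mathbf{ŁV}_2$ is the two-element Boolean algebra. $\mathcal{Q}(K)$ denotes the quasivariety generated by the class $K$. *)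

(* Defs.v *)
From Stdlib Require Import List.
From mathcomp Require Import all_boot.
Set Implicit Arguments. Unset Strict Implicit. Unset Printing Implicit Defensive.

Record MVsig := MkMVsig {
  carrier :> Type;
  mzero : carrier;
  mneg : carrier -> carrier;
  moplus : carrier -> carrier -> carrier
}.

Inductive term : Type :=
| tvar : nat -> term
| tzero : term
| tneg : term -> term
| toplus : term -> term -> term.

Fixpoint eval (A : MVsig) (v : nat -> A) (t : term) : A :=
  match t with
  | tvar i => v i
  | tzero => mzero A
  | tneg s => mneg (eval v s)
  | toplus s u => moplus (eval v s) (eval v u)
  end.

Record qeq := MkQeq { premises : list (term * term); concl : term * term }.

Definition sat (A : MVsig) (e : qeq) : Prop :=
  forall v : nat -> A,
    (forall p, List.In p (premises e) -> eval v p.1 = eval v p.2) ->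
    eval v (concl e).1 = eval v (concl e).2.

Definition MVclass := MVsig -> Prop.

Definition subclass (C D : MVclass) : Prop := forall A, C A -> D A.
Definition eqclass (C D : MVclass) : Prop := forall A, C A <-> D A.
Definition strict_subclass (C D : MVclass) : Prop :=
  subclass C D /\ ~ subclass D C.

Definition is_quasivariety (C : MVclass) : Prop :=
  exists Sigma : qeq -> Prop,
    forall A, C A <-> (forall e, Sigma e -> sat A e).

Definition Qgen (K : MVclass) : MVclass :=
  fun A => forall e, (forall B, K B -> sat B e) -> sat A e.

Definition single (A : MVsig) : MVclass := fun B => B = A.
Definition pair (A B : MVsig) : MVclass := fun X => X = A \/ X = B.

Definition prodMV (A B : MVsig) : MVsig :=
  @MkMVsig (A * B)%type (mzero A, mzero B)
    (fun x => (mneg x.1, mneg x.2))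
    (fun x y => (moplus x.1 y.1, moplus x.2 y.2)).

(* LV m is the chain LV_{m+1} = {0, 1/m, ..., 1}; element i/m is coded by
   i : 'I_m.+1. neg (i/m) = (m-i)/m, i/m (+) j/m = min(m, i+j)/m. *)
Lemma LV_neg_lt (m : nat) (x : 'I_m.+1) : m - x < m.+1.
Proof. by rewrite ltnS leq_subr. Qed.

Lemma LV_oplus_lt (m : nat) (x y : 'I_m.+1) : minn m (x + y) < m.+1.
Proof. by rewrite ltnS geq_minl. Qed.

Definition LV (m : nat) : MVsig :=
  @MkMVsig 'I_m.+1 ord0
    (fun x => Ordinal (LV_neg_lt x))
    (fun x y => Ordinal (LV_oplus_lt x y)).

Definition minimal_cover (bot top C : MVclass) : Prop :=
  [/\ is_quasivariety C, subclass C (Qgen top), strict_subclass (Qgen bot) C &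
      forall D, is_quasivariety D -> subclass D (Qgen top) ->
        strict_subclass (Qgen bot) D -> subclass D C -> subclass C D].

(* Main.v *)
Require Import Defs.
From mathcomp Require Import all_boot zify.
From Stdlib Require Import Classical.
From Stdlib Require List.
Set Implicit Arguments. Unset Strict Implicit. Unset Printing Implicit Defensive.

Definition hom (A B : MVsig) (f : A -> B) :=
  [/\ f (mzero A) = mzero B, (forall x, f (mneg x) = mneg (f x)) &
      (forall x y, f (moplus x y) = moplus (f x) (f y))].

Lemma hom_eval (A B : MVsig) (f : A -> B) (hf : hom f) (v : nat -> A) (t : term) :
  f (eval v t) = eval (fun i => f (v i)) t.
Proof.
case: hf => h0 hn ho; elim: t => //= [s IH | s IHs u IHu]; by rewrite ?hn ?ho ?IH ?IHs ?IHu.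
Qed.

Lemma hom_comp (A B C : MVsig) (f : A -> B) (g : B -> C) :
  hom f -> hom g -> hom (fun x => g (f x)).
Proof.
case=> f0 fn fo [g0 gn go]; split; first by rewrite f0 g0.
  by move=> x; rewrite fn gn.
by move=> x y; rewrite fo go.
Qed.

Lemma sep_Qgen (K : MVclass) (A : MVsig) :
  (forall a1 a2 : A, a1 <> a2 ->
     exists (B : MVsig) (f : A -> B), [/\ K B, hom f & f a1 <> f a2]) ->
  Qgen K A.
Proof.
move=> H e He v Hp.
apply: NNPP => Hne.
have [B [f [KB hf Hf]]] := H _ _ Hne.
apply: Hf. rewrite !(hom_eval hf). apply: (He B KB) => p Hin.
by rewrite -!(hom_eval hf) (Hp p Hin).
Qed.

Lemma qv_Qgen (D K : MVclass) :
  is_quasivariety D -> (forall B, K B -> D B) -> subclass (Qgen K) D.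
Proof.
move=> [S HS] HK A HA. apply/HS => e Se. apply: HA => B KB.
exact: ((HS B).1 (HK B KB) e Se).
Qed.

Lemma Qgen_qv (K : MVclass) : is_quasivariety (Qgen K).
Proof. by exists (fun e => forall B, K B -> sat B e). Qed.

Lemma Qgen_in (K : MVclass) A : K A -> Qgen K A.
Proof. by move=> KA e He; apply: He. Qed.

Lemma Qgen_mono (K K' : MVclass) : (forall B, K B -> Qgen K' B) -> subclass (Qgen K) (Qgen K').
Proof. by move=> H; apply: qv_Qgen => //; apply: Qgen_qv. Qed.

Lemma Qgen_eq (K : MVclass) (A : MVsig) (t1 t2 : term) :
  Qgen K A -> (forall B, K B -> forall w : nat -> B, eval w t1 = eval w t2) ->
  forall v : nat -> A, eval v t1 = eval v t2.
Proof.
move=> HA H v. apply: (HA (MkQeq nil (t1, t2))) => //= B KB w _. exact: H.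
Qed.

Lemma Qgen_qe (K : MVclass) (A : MVsig) (ps : list (term * term)) (c : term * term) :
  Qgen K A -> (forall B, K B -> sat B (MkQeq ps c)) ->
  forall v : nat -> A, (forall p, List.In p ps -> eval v p.1 = eval v p.2) ->
   eval v c.1 = eval v c.2.
Proof. by move=> HA H v; apply: (HA (MkQeq ps c)). Qed.

Definition vl m (x : LV m) : nat := @nat_of_ord m.+1 x.
Lemma vl_inj m (x y : LV m) : vl x = vl y -> x = y.
Proof. exact: (@ord_inj m.+1). Qed.
Lemma vl_le m (x : LV m) : vl x <= m.
Proof. by rewrite -ltnS; exact: (@ltn_ord m.+1). Qed.
Lemma vl0 m : vl (mzero (LV m)) = 0. Proof. by []. Qed.
Lemma vlN m (x : LV m) : vl (mneg x) = m - vl x. Proof. by []. Qed.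
Lemma vlD m (x y : LV m) : vl (moplus x y) = minn m (vl x + vl y). Proof. by []. Qed.

Fixpoint mult (j : nat) (t : term) : term :=
  match j with 0 => tzero | j'.+1 => toplus (mult j' t) t end.
Definition odot (a b : term) := tneg (toplus (tneg a) (tneg b)).
Definition tsub (a b : term) := tneg (toplus (tneg a) b).

Section Chain.
Variable N : nat.
Implicit Types w : nat -> LV N.

Lemma vlE0 w : vl (eval w tzero) = 0. Proof. by []. Qed.
Lemma vlEN w s : vl (eval w (tneg s)) = N - vl (eval w s). Proof. by []. Qed.
Lemma vlED w s u : vl (eval w (toplus s u)) = minn N (vl (eval w s) + vl (eval w u)).
Proof. by []. Qed.

Lemma vl_mult w j t : vl (eval w (mult j t)) = minn N (j * vl (eval w t)).
Proof.
elim: j => [|j IH]; first by rewrite mul0n minn0.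
rewrite vlED IH mulSn; have := vl_le (eval w t); lia.
Qed.

Lemma vl_odot w a b : vl (eval w (odot a b)) = vl (eval w a) + vl (eval w b) - N.
Proof.
rewrite /odot vlEN vlED !vlEN; have := vl_le (eval w a); have := vl_le (eval w b); lia.
Qed.

Lemma vl_tsub w a b : vl (eval w (tsub a b)) = vl (eval w a) - vl (eval w b).
Proof.
rewrite /tsub vlEN vlED !vlEN; have := vl_le (eval w a); have := vl_le (eval w b); lia.
Qed.
End Chain.

Fixpoint vb (V : nat) (t : term) : bool :=
  match t with
  | tvar i => i < V
  | tzero => true
  | tneg s => vb V s
  | toplus s u => vb V s && vb V u
  end.

Lemma eval_ext (A : MVsig) (w1 w2 : nat -> A) V t :
  vb V t -> (forall i, i < V -> w1 i = w2 i) -> eval w1 t = eval w2 t.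
Proof.
move=> hv H; elim: t hv => [i|//|s IH|s IHs u IHu] /=.
- exact: H.
- by move=> hs; rewrite IH.
- by move=> /andP[hs hu]; rewrite IHs ?IHu.
Qed.

Lemma vb_mono V V' t : vb V t -> V <= V' -> vb V' t.
Proof.
move=> h le; elim: t h => [i|//|s IH|s IHs u IHu] /=.
- by move=> hi; exact: leq_trans hi le.
- exact: IH.
- by move=> /andP[hs hu]; rewrite IHs ?IHu.
Qed.

Lemma vb_mult V j t : vb V t -> vb V (mult j t).
Proof. by move=> h; elim: j => //= j ->. Qed.

Lemma vb_ex t : exists V, vb V t.
Proof.
elim: t => [i||s [V h]|s [V1 h1] u [V2 h2]].
- by exists i.+1 => /=.
- by exists 0.
- by exists V.
- exists (maxn V1 V2) => /=. rewrite (vb_mono h1) ?(vb_mono h2) //; lia.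
Qed.

Lemma vb_list (ps : list (term * term)) : exists V, forall p, List.In p ps -> vb V p.1 && vb V p.2.
Proof.
elim: ps => [|[a b] ps [V HV]]; first by exists 0.
have [Va ha] := vb_ex a; have [Vb hb] := vb_ex b.
exists (maxn V (maxn Va Vb)) => p /= [<-|hp] /=.
- rewrite (vb_mono ha) ?(vb_mono hb) //; lia.
- have /andP[h1 h2] := HV p hp. rewrite (vb_mono h1) ?(vb_mono h2) //; lia.
Qed.

Definition psi (m : nat) : qeq :=
  MkQeq [:: (toplus (mult m (tvar 0)) (mult m (tvar 0)), mult m (tvar 0));
            (odot (tvar 0) (mult m.-1 (tvar 0)), tzero)] (tvar 0, tzero).

Lemma psi_chain (a m : nat) (w : nat -> LV a) : 0 < m ->
  (forall p, List.In p (premises (psi m)) -> eval w p.1 = eval w p.2) ->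
  vl (w 0) = 0 \/ m * vl (w 0) = a.
Proof.
move=> m0 H.
have h1 : eval w (toplus (mult m (tvar 0)) (mult m (tvar 0))) = eval w (mult m (tvar 0)).
  exact: (H _ (or_introl erefl)).
have h2 : eval w (odot (tvar 0) (mult m.-1 (tvar 0))) = eval w tzero.
  exact: (H _ (or_intror (or_introl erefl))).
move: h1 h2 => /(congr1 (@vl a)) h1 /(congr1 (@vl a)) h2.
rewrite vlED vl_mult in h1. rewrite vl_odot vl_mult vlE0 in h2.
have hz := vl_le (w 0).
set z := vl (w 0) in h1 h2 hz *.
have -> : m * z = m.-1 * z + z by rewrite -{1}(prednK m0) mulSn addnC.
move: h1 h2; rewrite -{1 2 3}(prednK m0) mulSn.
set P := m.-1 * z. lia.
Qed.

Lemma hom_fst (A B : MVsig) : hom (fun x : prodMV A B => x.1).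
Proof. by split. Qed.
Lemma hom_snd (A B : MVsig) : hom (fun x : prodMV A B => x.2).
Proof. by split. Qed.

Lemma prem_fst (A B : MVsig) (v : nat -> prodMV A B) (ps : list (term * term)) :
  (forall p, List.In p ps -> eval v p.1 = eval v p.2) ->
  (forall p, List.In p ps -> eval (fun i => (v i).1) p.1 = eval (fun i => (v i).1) p.2).
Proof. by move=> H p hp; rewrite -!(hom_eval (hom_fst A B)) (H p hp). Qed.
Lemma prem_snd (A B : MVsig) (v : nat -> prodMV A B) (ps : list (term * term)) :
  (forall p, List.In p ps -> eval v p.1 = eval v p.2) ->
  (forall p, List.In p ps -> eval (fun i => (v i).2) p.1 = eval (fun i => (v i).2) p.2).
Proof. by move=> H p hp; rewrite -!(hom_eval (hom_snd A B)) (H p hp). Qed.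

Lemma psi_valid (a m : nat) : 0 < m -> ~~ (m %| a) -> sat (LV a) (psi m).
Proof.
move=> m0 nd w H. have [h|h] := psi_chain m0 H; last first.
  by exfalso; move: nd; rewrite -h dvdn_mulr.
by apply: vl_inj.
Qed.

Lemma psi_fails (m : nat) : 0 < m -> ~ sat (prodMV (LV m) (LV 1)) (psi m).
Proof.
move=> m0 H.
have o1 : 1 < m.+1 by [].
pose x : prodMV (LV m) (LV 1) := (Ordinal o1, ord0).
have := H (fun _ => x).
have key : forall (t1 t2 : term),
   eval (fun _ => x.1) t1 = eval (fun _ => x.1) t2 ->
   eval (fun _ => x.2) t1 = eval (fun _ => x.2) t2 ->
   eval (fun _ => x) t1 = eval (fun _ => x) t2.
  move=> t1 t2 e1 e2.
  have -> : eval (fun _ => x) t1 = (eval (fun _ => x.1) t1, eval (fun _ => x.2) t1).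
    by rewrite -(hom_eval (hom_fst _ _)) -(hom_eval (hom_snd _ _)); case: (eval _ t1).
  have -> : eval (fun _ => x) t2 = (eval (fun _ => x.1) t2, eval (fun _ => x.2) t2).
    by rewrite -(hom_eval (hom_fst _ _)) -(hom_eval (hom_snd _ _)); case: (eval _ t2).
  by rewrite e1 e2.
move=> Hc.
have : eval (fun _ => x) (tvar 0) = eval (fun _ => x) tzero.
  apply: Hc => p.
  move=> [<-|[<-|//]].
  - apply: (key (toplus (mult m (tvar 0)) (mult m (tvar 0))) (mult m (tvar 0))); apply: vl_inj.
    + rewrite vlED !vl_mult /= ?muln1; lia.
    + rewrite vlED !vl_mult /= ?muln1 ?muln0; lia.
  - apply: (key (odot (tvar 0) (mult m.-1 (tvar 0))) tzero); apply: vl_inj.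
    + rewrite vl_odot !vl_mult vlE0 /= ?muln1 ?muln0; lia.
    + rewrite vl_odot !vl_mult vlE0 /= ?muln1 ?muln0; lia.
by move=> /(congr1 (fun y : prodMV (LV m) (LV 1) => vl y.1)).
Qed.

Lemma psi_fail_dvd (m m' : nat) : 1 < m' -> ~ sat (prodMV (LV m) (LV 1)) (psi m') -> m' %| m.
Proof.
move=> m1 H.
have [v [Hp Hc]] : exists v : nat -> prodMV (LV m) (LV 1),
   (forall p, List.In p (premises (psi m')) -> eval v p.1 = eval v p.2) /\
   v 0 <> mzero (prodMV (LV m) (LV 1)).
  apply: NNPP => hn; apply: H => v hp; apply: NNPP => hc; apply: hn; by exists v.
have m0 : 0 < m' by lia.
have [h1|h1] := psi_chain m0 (prem_fst Hp);
have [h2|h2] := psi_chain m0 (prem_snd Hp).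
- exfalso; apply: Hc. move: h1 h2; case: (v 0) => a b /= h1 h2.
  have -> : a = mzero (LV m) by apply: vl_inj.
  by have -> : b = mzero (LV 1) by apply: vl_inj.
- exfalso; move: h2; have := vl_le (v 0).2; case: (vl _) => [|[|]] //=; lia.
- by rewrite -h1 dvdn_mulr.
- by rewrite -h1 dvdn_mulr.
Qed.

Lemma emb_lt (a b c : nat) (H : b = a * c) (x : LV a) : vl x * c < b.+1.
Proof. rewrite ltnS H leq_mul2r; have := vl_le x; lia. Qed.

Definition emb (a b c : nat) (H : b = a * c) (x : LV a) : LV b := Ordinal (emb_lt H x).

Lemma vl_emb a b c (H : b = a * c) x : vl (emb H x) = vl x * c.
Proof. by []. Qed.

Lemma emb_hom a b c (H : b = a * c) : hom (emb H).
Proof.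
split.
- by apply: vl_inj; rewrite vl_emb.
- move=> x; apply: vl_inj; rewrite vl_emb !vlN vl_emb H mulnBl //.
- move=> x y; apply: vl_inj; rewrite vl_emb !vlD !vl_emb H.
  by rewrite -mulnDl minnMl.
Qed.

Lemma emb_inj a b c (H : b = a * c) x y : 0 < c -> emb H x = emb H y -> x = y.
Proof.
move=> c0 /(congr1 (@vl _)); rewrite !vl_emb => /eqP; rewrite eqn_mul2r.
by case/orP=> [/eqP c00|/eqP]; [move: c0; rewrite c00|apply: vl_inj].
Qed.

Definition TT (m : nat) := prodMV (LV m) (LV 1).

Lemma LV_in_Q (a b c : nat) : b = a * c -> 0 < c -> Qgen (single (LV b)) (LV a).
Proof.
move=> H c0; apply: sep_Qgen => x y hxy.
exists (LV b), (emb H); split => //; first exact: emb_hom.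
by move=> /(emb_inj c0).
Qed.

Lemma TT_in_Q (m N c : nat) : N = m * c -> 0 < c -> 0 < N -> Qgen (single (LV N)) (TT m).
Proof.
move=> H c0 N0.
have H1 : N = 1 * N by rewrite mul1n.
apply: sep_Qgen => x y hxy.
case: (eqVneq x.1 y.1) => [e1|n1].
- exists (LV N), (fun z : TT m => emb H1 z.2); split => //.
  + exact: (hom_comp (hom_snd _ _) (emb_hom H1)).
  + move=> /(emb_inj N0) e2; apply: hxy; move: e1 e2; case: x => ? ?; case: y => ? ? /= -> -> //.
- exists (LV N), (fun z : TT m => emb H z.1); split => //.
  + exact: (hom_comp (hom_fst _ _) (emb_hom H)).
  + by move=> /(emb_inj c0) e1; move: n1; rewrite e1 eqxx.
Qed.

Lemma strict_pair (n m : nat) : 1 < m -> ~~ (m %| n) ->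
  strict_subclass (Qgen (single (LV n))) (Qgen (pair (LV n) (TT m))).
Proof.
move=> m1 nd; split.
- apply: Qgen_mono => B ->; apply: Qgen_in; by left.
- move=> H. have : Qgen (single (LV n)) (TT m) by apply: H; apply: Qgen_in; right.
  move=> HT. apply: (@psi_fails m); first by lia.
  apply: HT => B ->; apply: psi_valid => //; lia.
Qed.

Lemma pair_in_Q (n m N c : nat) : N = n * c -> 0 < c -> m %| N -> 0 < N ->
  subclass (Qgen (pair (LV n) (TT m))) (Qgen (single (LV N))).
Proof.
move=> H c0 dm N0; apply: Qgen_mono => B [->|->].
- exact: LV_in_Q H c0.
- apply: (@TT_in_Q m N (N %/ m)) => //; first by rewrite mulnC divnK.
  have m0 : 0 < m by move: dm N0; case: (m) => //; rewrite dvd0n => /eqP ->.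
  by rewrite divn_gt0 // dvdn_leq.
Qed.

Section Reach.
Variables (N V : nat) (w : nat -> LV N).
Definition reach (y : nat) := exists t, vb V t /\ vl (eval w t) = y.

Lemma reach0 : reach 0. Proof. by exists tzero. Qed.
Lemma reachN : reach N. Proof. by exists (tneg tzero); split => //; rewrite vlEN vlE0 subn0. Qed.
Lemma reach_sub a b : reach a -> reach b -> reach (a - b).
Proof. move=> [ta [ha <-]] [tb [hb <-]]; exists (tsub ta tb); split; [by rewrite /= ha hb| by rewrite vl_tsub]. Qed.
Lemma reach_mult a j : reach a -> reach (minn N (j * a)).
Proof. move=> [ta [ha <-]]; exists (mult j ta); by rewrite vb_mult // vl_mult. Qed.

Lemma reach_gcd a b : reach a -> reach b -> reach (gcdn a b).
Proof.
move: {2}(a + b) (leqnn (a + b)) => s; elim: s a b => [|s IH] a b.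
  move=> h ra rb. have ha : a = 0 by lia. rewrite ha. rewrite gcd0n. exact rb.
move=> hs ra rb.
case: (posnP a) => [->|a0]; first by rewrite gcd0n.
case: (posnP b) => [->|b0]; first by rewrite gcdn0.
case: (leqP a b) => hab.
- have -> : gcdn a b = gcdn a (b - a) by rewrite -{1}(subnKC hab) gcdnDl.
  apply: IH; [lia| exact: ra| exact: reach_sub].
- have -> : gcdn a b = gcdn (a - b) b.
    by rewrite gcdnC -{1}(subnKC (ltnW hab)) gcdnDl gcdnC.
  apply: IH; [lia| exact: reach_sub| exact: rb].
Qed.
End Reach.

Definition Et (m N : nat) (s : term) :=
  odot (tneg (mult N (tneg (mult m s)))) (tneg (mult N (odot s (mult m.-1 s)))).
Definition tau (m N : nat) (p : term) := odot p (Et m N p).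

Lemma vb_tau V m N p : vb V p -> vb V (tau m N p).
Proof. by move=> h; rewrite /tau /Et /odot /= !vb_mult //= ?h ?vb_mult. Qed.

Lemma tau_val (m N M : nat) (w : nat -> LV N) p : N = m * M -> 0 < m -> 0 < M ->
  vl (eval w (tau m N p)) = if vl (eval w p) == M then M else 0.
Proof.
move=> NM m0 M0.
rewrite /tau /Et !vl_odot !vlEN !vl_mult !vl_odot !vlEN !vl_mult.
have := vl_le (eval w p).
set s := vl (eval w p).
have hPQ : m * s = m.-1 * s + s by rewrite -{1}(prednK m0) mulSn addnC.
have hle : (s <= M) = (m * s <= N) by rewrite NM leq_pmul2l.
have hge : (M <= s) = (N <= m * s) by rewrite NM leq_pmul2l.
have hNM : m * M = m.-1 * M + M by rewrite -{1}(prednK m0) mulSn addnC.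
set P := m * s in hPQ hle hge *.
set Q := m.-1 * s in hPQ *.
have hX : forall X, X = 0 \/ N <= N * X.
  by move=> [|X]; [left|right; rewrite leq_pmulr].
have N0 : 0 < N by rewrite NM muln_gt0 m0.
case: (hX (N - minn N P)) => h1; case: (hX (s + minn N Q - N)) => h2; rewrite ?h1 ?h2 ?muln0;
case: eqP => hs; move=> hsN; try lia.
Qed.

Section G.
Variables (N m M : nat) (NM : N = m * M) (m0 : 0 < m) (M0 : 0 < M).
Variables (B : MVsig) (HB : Qgen (single (LV N)) B) (tau : term).
Hypothesis good : forall w : nat -> LV N, vl (eval w tau) = 0 \/ vl (eval w tau) = M.
Variable v : nat -> B.

Definition gt (i j : nat) := toplus (mult i tau) (mult j (tneg (mult m tau))).

Lemma gt_val (w : nat -> LV N) i j : i <= m ->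
  vl (eval w (gt i j)) = if vl (eval w tau) == 0 then minn N (j * N) else i * M.
Proof.
move=> im; rewrite vlED !vl_mult vlEN vl_mult.
have hiM : i * M <= N by rewrite NM leq_mul2r im orbT.
have hmM : m * M = N by [].
case: (good w) => ->.
- rewrite eqxx !muln0; lia.
- have -> : (M == 0) = false by lia.
  rewrite hmM; lia.
Qed.

Lemma eqB (t1 t2 : term) : (forall w : nat -> LV N, vl (eval w t1) = vl (eval w t2)) ->
  eval v t1 = eval v t2.
Proof.
move=> H; apply: (Qgen_eq HB) => B' -> w; apply: vl_inj; exact: H.
Qed.

Definition g (x : TT m) : B := eval v (gt (vl x.1) (vl x.2)).

Lemma g_hom : hom g.
Proof.
split.
- rewrite /g; apply: (@eqB (gt 0 0) tzero) => w.
  rewrite gt_val // vlE0; case: ifP => _; lia.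
- move=> [x1 x2]; rewrite /g.
  have -> : vl (@mneg (TT m) (x1, x2)).1 = m - vl x1 by [].
  have -> : vl (@mneg (TT m) (x1, x2)).2 = 1 - vl x2 by [].
  apply: (@eqB _ (tneg (gt (vl x1) (vl x2)))) => w.
  have h1 := vl_le x1; have h2 := vl_le x2.
  rewrite vlEN !gt_val ?leq_subr //.
  case: ifP => _.
  + move: h2; case: (vl x2) => [|[|]] // _; rewrite ?mul0n ?mul1n ?subn0; lia.
  + by rewrite NM mulnBl.
- move=> [x1 x2] [y1 y2]; rewrite /g.
  have -> : vl (@moplus (TT m) (x1, x2) (y1, y2)).1 = minn m (vl x1 + vl y1) by [].
  have -> : vl (@moplus (TT m) (x1, x2) (y1, y2)).2 = minn 1 (vl x2 + vl y2) by [].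
  apply: (@eqB _ (toplus (gt (vl x1) (vl x2)) (gt (vl y1) (vl y2)))) => w.
  have h1 := vl_le x1; have h2 := vl_le x2; have h3 := vl_le y1; have h4 := vl_le y2.
  rewrite vlED !gt_val ?geq_minl //.
  case: ifP => _.
  + move: h2 h4; case: (vl x2) => [|[|]] // _; case: (vl y2) => [|[|]] // _;
    rewrite ?mul0n ?mul1n; lia.
  + by rewrite NM -mulnDl minnMl.
Qed.

Lemma g_inj (x y : TT m) : eval v tau <> mzero B -> x.2 = y.2 -> g x = g y -> x = y.
Proof.
move=> hnz e2 e; case: (eqVneq (vl x.1) (vl y.1)) => [e1|n1].
  by clear e; move: e1 e2; case: x => x1 x2; case: y => y1 y2 /= /vl_inj -> ->.
exfalso; apply: hnz.
have hx := vl_le x.1; have hy := vl_le y.1.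
apply: (@Qgen_qe _ _ [:: (gt (vl x.1) (vl x.2), gt (vl y.1) (vl x.2))] (tau, tzero) HB).
- move=> B' -> w Hw; apply: vl_inj.
  change (vl (eval w tau) = vl (eval w tzero)).
  have : eval w (gt (vl x.1) (vl x.2)) = eval w (gt (vl y.1) (vl x.2)) := Hw _ (or_introl erefl).
  move=> /(congr1 (@vl _)).
  rewrite !gt_val // vlE0; case: ifP => [/eqP//|_].
  move=> /eqP; rewrite eqn_mul2r; case/orP => /eqP h; [lia| by move: n1; rewrite h eqxx].
- move=> p [<-|//] /=. by move: e; rewrite /g e2.
Qed.
End G.

Lemma TT_in_pair (N m M n : nat) (B : MVsig) (tau : term) (v : nat -> B) :
  N = m * M -> 0 < m -> 0 < M -> Qgen (single (LV N)) B ->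
  (forall w : nat -> LV N, vl (eval w tau) = 0 \/ vl (eval w tau) = M) ->
  eval v tau <> mzero B -> 0 < n ->
  Qgen (pair B (LV n)) (TT m).
Proof.
move=> NM m0 M0 HB good hnz n0.
apply: sep_Qgen => x y hxy.
case: (eqVneq x.2 y.2) => [e2|n2].
  - exists B, (fun z : TT m => eval v (gt m tau (vl z.1) (vl z.2))); split; first by left.
  + exact: (g_hom NM m0 M0 HB good v).
  + by move=> e; apply: hxy; apply: (g_inj NM m0 M0 HB good hnz e2 e).
- have H1 : n = 1 * n by rewrite mul1n.
  exists (LV n), (fun z : TT m => emb H1 z.2); split; first by right.
  + exact: (hom_comp (hom_snd _ _) (emb_hom H1)).
  + by move=> /(emb_inj n0) e; move: n2; rewrite e eqxx.
Qed.

Definition cand (n k m : nat) := exists q, [/\ prime q, q %| k & m = q ^ (logn q n).+1].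

Section Scale.
Variables (n k V : nat) (k0 : 0 < k) (w : nat -> LV (n * k)).
Hypothesis Hk : forall i, i < V -> k %| vl (w i).

Lemma sc_lt i : vl (w i) %/ k < n.+1.
Proof.
rewrite ltnS; apply: (@leq_trans ((n * k) %/ k)); first by rewrite leq_div2r // vl_le.
by rewrite mulnK.
Qed.

Definition wsc (i : nat) : LV n := Ordinal (sc_lt i).

Lemma wsc_eval t : vb V t -> vl (eval wsc t) * k = vl (eval w t).
Proof.
elim: t => [i||s IH|s IHs u IHu].
- move=> hi; change (vl (w i) %/ k * k = vl (w i)); by rewrite divnK // Hk.
- by [].
- move=> hs; rewrite vlEN vlEN mulnBl -IH //.
- move=> /andP[hs hu]; rewrite vlED vlED minnMl mulnDl IHs // IHu //.
Qed.
End Scale.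

Lemma step1 (n k V : nat) (hk : 0 < k) (e : qeq) (He : sat (LV n) e)
  (hV : forall p, List.In p (concl e :: premises e) -> vb V p.1 && vb V p.2)
  (w : nat -> LV (n * k)) :
  (forall p, List.In p (premises e) -> eval w p.1 = eval w p.2) ->
  eval w (concl e).1 <> eval w (concl e).2 ->
  exists i, i < V /\ ~~ (k %| vl (w i)).
Proof.
move=> Hp Hc; apply: NNPP => hne.
have Hk : forall i, i < V -> k %| vl (w i).
  move=> i hi; apply: NNPP => hd; apply: hne; exists i; split => //; exact/negP.
apply: Hc.
have hc := hV _ (or_introl erefl); move: hc => /andP [hc1 hc2].
apply: vl_inj; rewrite -(wsc_eval hk Hk hc1) -(wsc_eval hk Hk hc2).
congr (_ * _); congr vl.
apply: He => p hp.
have /andP [h1 h2] := hV _ (or_intror hp).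
apply: vl_inj; apply/eqP; rewrite -(eqn_pmul2r hk).
by rewrite (wsc_eval hk Hk h1) (wsc_eval hk Hk h2) (Hp p hp).
Qed.

Lemma step2 (n k x : nat) : 0 < n -> 1 < k -> ~~ (k %| x) ->
  exists q, [/\ prime q, q %| k & q ^ (logn q n).+1 %| (n * k) %/ gcdn x (n * k)].
Proof.
move=> n0 k1 nkx.
have k0 : 0 < k by lia.
have N0 : 0 < n * k by rewrite muln_gt0 n0.
set N := n * k in N0 *.
have g0 : 0 < gcdn x N by rewrite gcdn_gt0 N0 orbT.
set g := gcdn x N in g0 *.
set d := N %/ g.
have hd : N = d * g by rewrite divnK // dvdn_gcdr.
have d0 : 0 < d by move: N0; rewrite hd muln_gt0 => /andP[].
have nd : ~~ (d %| n).
  apply/negP => dn.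
  have hn : n = (n %/ d) * d by rewrite divnK.
  have hg : g = (n %/ d) * k.
    apply/eqP; rewrite -(eqn_pmul2l d0) -hd /N {1}hn.
    by rewrite -mulnA mulnCA.
  move: nkx; rewrite (dvdn_trans _ (dvdn_gcdl x N)) //.
  by rewrite -/g hg dvdn_mull.
case: (dvdn_partP n d0) nd => [//|Hn] _.
have [p hp] : exists p, ~ (p \in \pi(d) -> d`_p %| n).
  by apply: not_all_ex_not.
have [pi nd'] := imply_to_and _ _ hp.
have pp : prime p by move: pi; rewrite mem_primes => /andP[].
move: nd'; rewrite p_part pfactor_dvdn // => /negP; rewrite -ltnNge => hlt.
exists p; split => //.
- have hdN : d %| N by rewrite hd dvdn_mulr.
  have := dvdn_leq_log p N0 hdN.
  rewrite /N lognM // => hle.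
  have : 0 < logn p k by lia.
  by rewrite logn_gt0 mem_primes => /and3P[].
- by rewrite pfactor_dvdn.
Qed.

Definition goodt (N M : nat) (t : term) :=
  forall w : nat -> LV N, vl (eval w t) = 0 \/ vl (eval w t) = M.

Lemma K1 (n k V : nat) (hn : 0 < n) (hk : 1 < k) (e : qeq) (He : sat (LV n) e)
  (hV : forall p, List.In p (concl e :: premises e) -> vb V p.1 && vb V p.2)
  (w : nat -> LV (n * k)) :
  (forall p, List.In p (premises e) -> eval w p.1 = eval w p.2) ->
  eval w (concl e).1 <> eval w (concl e).2 ->
  exists m M t, [/\ cand n k m, n * k = m * M, vb V t, goodt (n * k) M t &
                    vl (eval w t) <> 0].
Proof.
move=> Hp Hc.
have k0 : 0 < k by lia.
have [i [iV nki]] := step1 k0 He hV Hp Hc.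
have [q [pq qk hm]] := step2 hn hk nki.
have N0 : 0 < n * k by rewrite muln_gt0 hn.
move: N0 Hp Hc nki hm; set N := n * k => N0 Hp Hc nki hm.
set x := vl (w i) in nki hm.
have g0 : 0 < gcdn x N by rewrite gcdn_gt0 N0 orbT.
set g := gcdn x N in g0 hm.
set d := N %/ g in hm.
set m := q ^ (logn q n).+1 in hm.
have hd : N = d * g by rewrite divnK // dvdn_gcdr.
have m0 : 0 < m by rewrite expn_gt0 prime_gt0.
set M := (d %/ m) * g.
have NM : N = m * M by rewrite /M hd -{1}(divnK hm) -mulnA mulnCA.
have M0 : 0 < M by move: N0; rewrite NM muln_gt0 => /andP[].
have MN : M <= N by rewrite NM leq_pmull.
have rx : reach V w x by exists (tvar i).
have rg : reach V w g := reach_gcd rx (reachN V w).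
have [p [vp hp]] : reach V w M.
  have := reach_mult (d %/ m) rg; rewrite -/M.
  by have -> : minn N M = M by lia.
exists m, M, (tau m N p); split.
- by exists q.
- exact: NM.
- exact: vb_tau.
- by move=> w'; rewrite (tau_val _ _ NM m0 M0); case: ifP; [right|left].
- by rewrite (tau_val _ _ NM m0 M0) hp eqxx; lia.
Qed.

Lemma part_a (n k : nat) (hn : 0 < n) (hk : 1 < k) (D : MVclass) :
  is_quasivariety D -> subclass D (Qgen (single (LV (n * k)))) ->
  strict_subclass (Qgen (single (LV n))) D ->
  exists q, [/\ prime q, q %| k & D (TT (q ^ (logn q n).+1))].
Proof.
move=> qD Dsub [hsub hns].
have LVnD : D (LV n) by apply: hsub; apply: Qgen_in.
have [B [DB nB]] : exists B, D B /\ ~ Qgen (single (LV n)) B.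
  apply: NNPP => H; apply: hns => B DB; apply: NNPP => nq; apply: H; by exists B.
have [e [He nse]] : exists e, (forall B', single (LV n) B' -> sat B' e) /\ ~ sat B e.
  apply: NNPP => H; apply: nB => e He; apply: NNPP => ns; apply: H; by exists e.
have [v [Hpv Hcv]] : exists v : nat -> B,
    (forall p, List.In p (premises e) -> eval v p.1 = eval v p.2) /\
    eval v (concl e).1 <> eval v (concl e).2.
  apply: NNPP => H; apply: nse => v hp; apply: NNPP => hc; apply: H; by exists v.
have HB := Dsub B DB.
have [V hV] := vb_list (concl e :: premises e).
have He' : sat (LV n) e := He _ erefl.
have [m [M [t [cm NM gtt hnz]]]] : exists m M t,
    [/\ cand n k m, n * k = m * M, goodt (n * k) M t & eval v t <> mzero B].
  apply: NNPP => Hne.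
  have H0 : forall m M t, cand n k m -> n * k = m * M -> goodt (n * k) M t ->
      eval v t = mzero B.
    move=> m M t c1 c2 c3; apply: NNPP => c4; apply: Hne; exists m, M, t; by split.
  pose Qt t := t = tzero \/ exists m M, [/\ cand n k m, n * k = m * M & goodt (n * k) M t].
  pose wf (f : {ffun 'I_V -> 'I_(n * k).+1}) : nat -> LV (n * k) :=
    fun i => if (insub i : option 'I_V) is Some j then f j else ord0.
  pose Pf f t := vb V t /\
    ((forall p, List.In p (premises e) -> eval (wf f) p.1 = eval (wf f) p.2) ->
     eval (wf f) (concl e).1 <> eval (wf f) (concl e).2 ->
     eval (wf f) t <> mzero (LV (n * k))).
  have perf : forall f, exists t, Qt t /\ Pf f t.
    move=> f.
    case: (classic ((forall p, List.In p (premises e) -> eval (wf f) p.1 = eval (wf f) p.2) /\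
                    eval (wf f) (concl e).1 <> eval (wf f) (concl e).2)) => [[h1 h2]|hn'].
    - have [m [M [t [c1 c2 c3 c4 c5]]]] := K1 hn hk He' hV h1 h2.
      exists t; split; first by right; exists m, M.
      split => // _ _ /(congr1 (@vl _)); exact: c5.
    - exists tzero; split; first by left.
      split => // h1 h2; exfalso; apply: hn'; by split.
  have [ts [Hts1 Hts2]] : exists ts : list term,
      (forall t, List.In t ts -> Qt t) /\ (forall f, exists t, List.In t ts /\ Pf f t).
    suff : forall l : seq {ffun 'I_V -> 'I_(n * k).+1}, exists ts,
        (forall t, List.In t ts -> Qt t) /\
        (forall f, f \in l -> exists t, List.In t ts /\ Pf f t).
      move=> /(_ (enum {ffun 'I_V -> 'I_(n * k).+1})) [ts [h1 h2]].
      exists ts; split => // f; apply: h2; by rewrite mem_enum.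
    elim=> [|f l [ts [h1 h2]]]; first by exists nil.
    have [t [qt pt]] := perf f.
    exists (t :: ts); split.
    - by move=> t' [<-|ht]; [|apply: h1].
    - move=> f'; rewrite in_cons => /orP [/eqP ->|hf].
        by exists t; split => //; left.
      have [t' [ht' pt']] := h2 f' hf; exists t'; split => //; by right.
  have sat' : sat (LV (n * k))
      (MkQeq (List.app (premises e) (List.map (fun t => (t, tzero)) ts)) (concl e)).
    move=> w Hw.
    pose f := [ffun j : 'I_V => w (val j)].
    have agree : forall u, vb V u -> eval (wf f) u = eval w u.
      move=> u hu; apply: (eval_ext hu) => i hi.
      by rewrite /wf insubT ffunE.
    have [t [ht [vt Pt]]] := Hts2 f.
    apply: NNPP => hc.
    have hp : forall p, List.In p (premises e) -> eval (wf f) p.1 = eval (wf f) p.2.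
      move=> p hp; have /andP[h1 h2] := hV p (or_intror hp).
      rewrite !agree //; apply: Hw; apply/List.in_app_iff; by left.
    have hcf : eval (wf f) (concl e).1 <> eval (wf f) (concl e).2.
      have /andP[h1 h2] := hV _ (or_introl erefl). by rewrite !agree.
    apply: (Pt hp hcf). rewrite agree //.
    apply: (Hw (t, tzero)). apply/List.in_app_iff; right; apply/List.in_map_iff; by exists t.
  apply: Hcv.
  apply: (Qgen_qe (ps := List.app (premises e) (List.map (fun t => (t, tzero)) ts)) HB).
  - by move=> B' ->.
  - move=> p hp0.
    case: (proj1 (List.in_app_iff _ _ _) hp0) => [hp|hp']; first exact: Hpv.
    have [t [<- ht]] := proj1 (List.in_map_iff _ _ _) hp'.
    case: (Hts1 t ht) => [->|[m [M [c1 c2 c3]]]] //.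
    exact: H0 c1 c2 c3.
have [q [pq qk hmq]] := cm.
exists q; split => //.
rewrite -hmq.
have m0 : 0 < m by rewrite hmq expn_gt0 prime_gt0.
have N0 : 0 < n * k by rewrite muln_gt0 hn /=; lia.
have M0 : 0 < M by move: N0; rewrite NM muln_gt0 => /andP[].
apply: (qv_Qgen (K := pair B (LV n)) qD); first by move=> B' [->|->].
exact: (TT_in_pair NM m0 M0 HB gtt hnz hn).
Qed.

Section Main.
Variables (n k : nat) (hn : 0 < n) (hk : 1 < k).

Lemma cand_facts q : prime q -> q %| k ->
  [/\ 1 < q ^ (logn q n).+1, ~~ (q ^ (logn q n).+1 %| n) & q ^ (logn q n).+1 %| n * k].
Proof.
move=> pq qk; split.
- by rewrite -{1}(expn0 q) ltn_exp2l ?prime_gt1.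
- by rewrite pfactor_dvdn // ltnn.
- by rewrite expnSr dvdn_mul // pfactor_dvdnn.
Qed.

Lemma N0 : 0 < n * k. Proof. rewrite muln_gt0 hn /=; lia. Qed.
Lemma k0 : 0 < k. Proof. lia. Qed.

Definition Cq q := Qgen (pair (LV n) (TT (q ^ (logn q n).+1))).

Lemma Cq_top q : prime q -> q %| k -> subclass (Cq q) (Qgen (single (LV (n * k)))).
Proof.
move=> pq qk; have [_ _ hd] := cand_facts pq qk.
exact: (pair_in_Q (c := k) erefl k0 hd N0).
Qed.

Lemma Cq_strict q : prime q -> q %| k -> strict_subclass (Qgen (single (LV n))) (Cq q).
Proof. move=> pq qk; have [h1 h2 _] := cand_facts pq qk; exact: strict_pair. Qed.

Lemma Cq_uniq q q' : prime q -> q %| k -> prime q' -> q' %| k ->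
  Cq q (TT (q' ^ (logn q' n).+1)) -> q' = q.
Proof.
move=> pq qk pq' qk' H.
have [h1 h2 _] := cand_facts pq' qk'.
have ns : ~ sat (TT (q ^ (logn q n).+1)) (psi (q' ^ (logn q' n).+1)).
  move=> hs; apply: (@psi_fails (q' ^ (logn q' n).+1)); first by lia.
  apply: H => B [->|->] //; apply: psi_valid => //; lia.
have := psi_fail_dvd h1 ns => hd.
have : q' %| q ^ (logn q n).+1 by apply: dvdn_trans hd; rewrite dvdn_exp.
by rewrite Euclid_dvdX // andbT dvdn_prime2 // => /eqP.
Qed.

Lemma main_iff (C : MVclass) :
  minimal_cover (single (LV n)) (single (LV (n * k))) C <->
  exists q, [/\ prime q, q %| k & eqclass C (Cq q)].
Proof.
split.
- case=> qC subC [hsub hns] minC.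
  have [q [pq qk TC]] := part_a hn hk qC subC (conj hsub hns).
  exists q; split => //.
  have LC : C (LV n) by apply: hsub; apply: Qgen_in.
  have CqC : subclass (Cq q) C by apply: qv_Qgen => // B [->|->].
  have := minC (Cq q) (Qgen_qv _) (Cq_top pq qk) (Cq_strict pq qk) CqC.
  by move=> CCq A; split; [apply: CCq|apply: CqC].
- case=> q [pq qk eC].
  have [S HS] := Qgen_qv (pair (LV n) (TT (q ^ (logn q n).+1))).
  split.
  + by exists S => A; apply: iff_trans (eC A) (HS A).
  + by move=> A /eC; apply: Cq_top.
  + have [s1 s2] := Cq_strict pq qk; split.
    * by move=> A /s1 /eC.
    * by move=> h; apply: s2 => A /eC /h.
  + move=> D qD subD strD DC.
    have [q' [pq' qk' TD]] := part_a hn hk qD subD strD.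
    have eq' : q' = q by apply: (Cq_uniq pq qk pq' qk'); apply/eC; apply: DC.
    rewrite eq' in TD.
    have LD : D (LV n) by case: strD => h _; apply: h; apply: Qgen_in.
    move=> A /eC; apply: qv_Qgen => // B [->|->] //.
Qed.
End Main.

Theorem theorem5p9 (n k : nat) (hn : 0 < n) (hk : 1 < k) (C : MVclass) :
  minimal_cover (single (LV n)) (single (LV (n * k))) C <->
  ((exists q : nat,
       [/\ prime q, q %| k, ~~ (q %| n) &
           eqclass C (Qgen (pair (LV n) (prodMV (LV q) (LV 1))))]) \/
   (exists q r : nat,
       [/\ prime q, 1 <= r, q %| k, (q ^ r %| n) && ~~ (q ^ r.+1 %| n) &
           eqclass C (Qgen (pair (LV n) (prodMV (LV (q ^ r.+1)) (LV 1))))])).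
Proof.
apply: iff_trans (main_iff hn hk C) _.
split.
- case=> q [pq qk eC].
  case: (posnP (logn q n)) => r0.
  + left; exists q; split => //.
    * apply/negP => h.
      have : 0 < logn q n by rewrite logn_gt0 mem_primes pq hn h.
      by rewrite r0.
    * by move: eC; rewrite /Cq r0 expn1.
  + right; exists q, (logn q n); split => //.
    by rewrite !pfactor_dvdn // leqnn ltnn.
- case=> [[q [pq qk nqn eC]]|[q [r [pq r1 qk h eC]]]].
  + exists q; split => //.
    have r0 : logn q n = 0.
      apply/eqP; rewrite -leqn0 leqNgt logn_gt0 mem_primes pq hn /=; exact: nqn.
    by rewrite /Cq r0 expn1.
  + exists q; split => //.
    have hr : logn q n = r.
      by move: h; rewrite !pfactor_dvdn // -ltnNge; move=> /andP[a b]; lia.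
    by rewrite /Cq hr.
Qed.
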